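(* Let $\lambda>0$ and let $(g,X)$ satisfy $\mathrm{Ric}(g)=\tfrac12X^\flat\otimes X^\flat-\tfrac12\mathcal{L}_Xg+\lambda g$ with $g=\frac{3}{\lambda}(\mathrm{d}\theta^2+\sin^2\theta\,\mathrm{d}\phi^2)$ the round metric on (an open subset of) $S^2$ and $X^\flat=-2\,\mathrm{d}F/F$ for a nonvanishing function $F(\theta,\phi)$. Then, after a rotation of $\phi$, $F=a\sin\phi\sin\theta+b\cos\theta$ for constants $a,b$; in particular $X$ cannot extend smoothly to all of $S^2$.
   Context: $(\theta,\phi)$ are standard spherical coordinates. *)

(* Defs.v *)
From Stdlib Require Import Reals.
From Coquelicot Require Import Coquelicot.
Open Scope R_scope.

(* Points of the (theta, phi) coordinate plane: p = (theta, phi). *)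
Definition pt := (R * R)%type.

Definition sum2 (f : nat -> R) : R := f 0%nat + f 1%nat.

(* Partial derivative with respect to coordinate i (0 = theta, 1 = phi). *)
Definition pd (i : nat) (f : pt -> R) (p : pt) : R :=
  match i with
  | 0%nat => Derive (fun t => f (t, snd p)) (fst p)
  | _ => Derive (fun t => f (fst p, t)) (snd p)
  end.

Definition ex_pd (i : nat) (f : pt -> R) (p : pt) : Prop :=
  match i with
  | 0%nat => ex_derive (fun t => f (t, snd p)) (fst p)
  | _ => ex_derive (fun t => f (fst p, t)) (snd p)
  end.

Fixpoint pds (l : list nat) (f : pt -> R) : pt -> R :=
  match l with
  | nil => f
  | cons i l' => pd i (pds l' f)
  end.

Definition smooth_on (U : pt -> Prop) (f : pt -> R) : Prop :=
  forall (l : list nat) (p : pt), U p ->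
    (forall i, List.In i l -> (i <= 1)%nat) ->
    continuous (pds l f) p /\ ex_pd 0 (pds l f) p /\ ex_pd 1 (pds l f) p.

Definition connected_set (U : pt -> Prop) : Prop :=
  forall A B : pt -> Prop, open A -> open B ->
    (forall p, U p -> A p \/ B p) ->
    (exists p, U p /\ A p) -> (exists p, U p /\ B p) ->
    exists p, U p /\ A p /\ B p.

Definition metric2 := nat -> nat -> pt -> R.

Definition mdet (g : metric2) (p : pt) : R :=
  g 0%nat 0%nat p * g 1%nat 1%nat p - g 0%nat 1%nat p * g 1%nat 0%nat p.

Definition ginv (g : metric2) (i j : nat) (p : pt) : R :=
  match i, j with
  | 0%nat, 0%nat => g 1%nat 1%nat p / mdet g p
  | 0%nat, _ => - g 0%nat 1%nat p / mdet g p
  | _, 0%nat => - g 1%nat 0%nat p / mdet g p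
  | _, _ => g 0%nat 0%nat p / mdet g p
  end.

Definition christoffel (g : metric2) (k i j : nat) (p : pt) : R :=
  / 2 * sum2 (fun l => ginv g k l p *
     (pd i (g j l) p + pd j (g i l) p - pd l (g i j) p)).

Definition ricci (g : metric2) (i j : nat) (p : pt) : R :=
  sum2 (fun k => pd k (christoffel g k i j) p)
  - sum2 (fun k => pd j (christoffel g k i k) p)
  + sum2 (fun k => sum2 (fun l =>
       christoffel g k k l p * christoffel g l i j p
     - christoffel g k j l p * christoffel g l i k p)).

Definition vfield2 := nat -> pt -> R.

Definition flat (g : metric2) (X : vfield2) (i : nat) (p : pt) : R :=
  sum2 (fun j => g i j p * X j p).

Definition lie_metric (g : metric2) (X : vfield2) (i j : nat) (p : pt) : R :=
  sum2 (fun k => X k p * pd k (g i j) p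
                 + g k j p * pd i (X k) p
                 + g i k p * pd j (X k) p).

Definition round_metric (lam : R) : metric2 :=
  fun i j p =>
    match i, j with
    | 0%nat, 0%nat => 3 / lam
    | 1%nat, 1%nat => 3 / lam * (sin (fst p))^2
    | _, _ => 0
    end.

(* Main.v *)
Require Import Defs.
From Stdlib Require Import Reals Lra Lia FunctionalExtensionality.
From Coquelicot Require Import Coquelicot.
Open Scope R_scope.

Lemma Dconst (c x : R) : Derive (fun _ : R => c) x = 0.
Proof. apply Derive_const. Qed.

Lemma pg00 lam i p : pd i (round_metric lam O O) p = 0.
Proof. destruct i; unfold pd, round_metric; simpl; apply Dconst. Qed.
Lemma pg01 lam i p : pd i (round_metric lam O 1%nat) p = 0.
Proof. destruct i; unfold pd, round_metric; simpl; apply Dconst. Qed.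
Lemma pg10 lam i p : pd i (round_metric lam 1%nat O) p = 0.
Proof. destruct i; unfold pd, round_metric; simpl; apply Dconst. Qed.
Lemma pg11_1 lam p : pd 1%nat (round_metric lam 1%nat 1%nat) p = 0.
Proof. unfold pd, round_metric; simpl; apply Dconst. Qed.
Lemma pg11_0 lam p : pd O (round_metric lam 1%nat 1%nat) p = 2 * (3/lam) * sin (fst p) * cos (fst p).
Proof. apply is_derive_unique. unfold round_metric; simpl. auto_derive; auto. ring. Qed.

Definition Gm (k i j : nat) (t : R) : R :=
  match k, i, j with
  | O, 1%nat, 1%nat => - (sin t * cos t)
  | 1%nat, O, 1%nat => cos t / sin t
  | 1%nat, 1%nat, O => cos t / sin t
  | _, _, _ => 0
  end.

Lemma chr lam k i j p : 0 < lam -> (k <= 1)%nat -> (i <= 1)%nat -> (j <= 1)%nat ->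
  christoffel (round_metric lam) k i j p = Gm k i j (fst p).
Proof.
  intros Hl Hk Hi Hj.
  unfold christoffel, sum2, ginv, mdet.
  destruct k as [|[|k]]; try lia;
  destruct i as [|[|i]]; try lia;
  destruct j as [|[|j]]; try lia;
  rewrite ?pg00, ?pg01, ?pg10, ?pg11_0, ?pg11_1;
  unfold round_metric, Gm; simpl;
  (destruct (Req_dec (sin (fst p)) 0) as [E|E];
   [ rewrite ?E; unfold Rdiv; rewrite ?Rinv_0; try ring;
     rewrite ?Rmult_0_l, ?Rmult_0_r, ?Rminus_0_r, ?Rinv_0; ring
   | field; split; lra ]).
Qed.

Lemma chrf lam k i j : 0 < lam -> (k <= 1)%nat -> (i <= 1)%nat -> (j <= 1)%nat ->
  christoffel (round_metric lam) k i j = fun q => Gm k i j (fst q).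
Proof. intros; apply functional_extensionality; intros; apply chr; auto. Qed.

Lemma pd_fst0 h p : pd O (fun q => h (fst q)) p = Derive h (fst p).
Proof. reflexivity. Qed.
Lemma pd_fst1 h p : pd 1%nat (fun q => h (fst q)) p = 0.
Proof. unfold pd. simpl. apply Derive_const. Qed.

Lemma D_cot t : sin t <> 0 -> Derive (fun t => cos t / sin t) t = - / (sin t ^ 2).
Proof. intros. apply is_derive_unique. auto_derive; auto. 
  assert (E := sin2_cos2 t); unfold Rsqr in E.
  replace (- / sin t ^ 2) with (- (sin t * sin t + cos t * cos t) / sin t ^ 2)
    by (rewrite E; field; auto).
  field; auto. Qed.
Lemma D_sc t : Derive (fun t => - (sin t * cos t)) t = - (cos t ^2 - sin t ^ 2).
Proof. apply is_derive_unique. auto_derive; auto. ring. Qed.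

Lemma ricci_val lam i j p : 0 < lam -> 0 < fst p < PI -> (i <= 1)%nat -> (j <= 1)%nat ->
  ricci (round_metric lam) i j p =
  match i, j with O, O => 1 | 1%nat, 1%nat => sin (fst p) ^ 2 | _, _ => 0 end.
Proof.
  intros Hl Hp Hi Hj.
  assert (Hs : sin (fst p) > 0) by (apply sin_gt_0; lra).
  unfold ricci, sum2.
  repeat rewrite chrf by (auto || lia).
  rewrite ?pd_fst1, ?pd_fst0.
  destruct i as [|[|i]]; try lia;
  destruct j as [|[|j]]; try lia; simpl;
  unfold Gm; rewrite ?D_cot, ?D_sc, ?Dconst by lra.
  - assert (E := sin2_cos2 (fst p)); unfold Rsqr in E.
    field_simplify; [rewrite <- E at 1; field; lra | lra].
  - field; lra.
  - field; lra.
  - field; lra.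
Qed.

Lemma Dq (f g h : R -> R) x k : ex_derive f x -> ex_derive g x -> ex_derive h x -> g x * h x <> 0 ->
  Derive (fun t => k * f t / (g t * h t)) x =
  k * (Derive f x * (g x * h x) - f x * (Derive g x * h x + g x * Derive h x)) / (g x * h x) ^ 2.
Proof. intros. apply is_derive_unique. auto_derive; [tauto|].
  change (Derive (fun y : R => f y) x) with (Derive f x).
  change (Derive (fun y : R => g y) x) with (Derive g x).
  change (Derive (fun y : R => h y) x) with (Derive h x).
  field. split; intro E; apply H2; rewrite E; ring. Qed.

Lemma D_s2 t : Derive (fun t => sin t ^ 2) t = 2 * sin t * cos t.
Proof. apply is_derive_unique. auto_derive; auto. ring. Qed.

Lemma loc0 (U : pt -> Prop) p : open U -> U p -> locally (fst p) (fun t => U (t, snd p)).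
Proof.
  intros HU Hp. destruct p as [x y]. simpl.
  apply (locally_2d_1d_const_y (fun u v => U (u, v)) x y).
  apply locally_2d_locally.
  apply HU in Hp. eapply filter_imp; [|exact Hp]. intros [a b]; simpl; auto.
Qed.
Lemma loc1 (U : pt -> Prop) p : open U -> U p -> locally (snd p) (fun t => U (fst p, t)).
Proof.
  intros HU Hp. destruct p as [x y]. simpl.
  apply (locally_2d_1d_const_x (fun u v => U (u, v)) x y).
  apply locally_2d_locally.
  apply HU in Hp. eapply filter_imp; [|exact Hp]. intros [a b]; simpl; auto.
Qed.

Lemma pd_loc (U : pt -> Prop) i f h p : open U -> U p -> (forall q, U q -> f q = h q) ->
  pd i f p = pd i h p.
Proof.
  intros HU Hp E. destruct i; unfold pd; apply Derive_ext_loc.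
  - eapply filter_imp; [|apply (loc0 U p HU Hp)]. intros t Ht; auto.
  - eapply filter_imp; [|apply (loc1 U p HU Hp)]. intros t Ht; auto.
Qed.

Lemma smooth_ex (U : pt -> Prop) F l p : smooth_on U F -> U p -> (forall i, List.In i l -> (i <= 1)%nat) ->
  ex_pd O (pds l F) p /\ ex_pd 1%nat (pds l F) p.
Proof. intros H Hp Hl. destruct (H l p Hp Hl) as [_ [A B]]. auto. Qed.

Lemma pde lam (U : pt -> Prop) (X : vfield2) (F : pt -> R) p :
  0 < lam -> open U ->
  (forall p, U p -> 0 < fst p < PI) ->
  smooth_on U F ->
  (forall p, U p -> F p <> 0) ->
  (forall i p, (i <= 1)%nat -> U p ->
     flat (round_metric lam) X i p = -2 * pd i F p / F p) ->
  (forall i j p, (i <= 1)%nat -> (j <= 1)%nat -> U p ->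
     ricci (round_metric lam) i j p =
       / 2 * (flat (round_metric lam) X i p * flat (round_metric lam) X j p)
       - / 2 * lie_metric (round_metric lam) X i j p
       + lam * round_metric lam i j p) ->
  U p ->
  pd O (pd O F) p = - F p /\
  pd O (pd 1%nat F) p + pd 1%nat (pd O F) p = 2 * cos (fst p) / sin (fst p) * pd 1%nat F p /\
  pd 1%nat (pd 1%nat F) p = - (sin (fst p) * cos (fst p) * pd O F p) - sin (fst p) ^ 2 * F p.
Proof.
  intros Hl HU Hth HF HF0 Hflat Hric Hp.
  assert (Hs : forall q, U q -> sin (fst q) > 0) by (intros q Hq; apply sin_gt_0; apply Hth; auto).
  assert (HX0 : forall q, U q -> X O q = (-2 / (3/lam)) * pd O F q / ((fun _ => 1) (fst q) * F q)).
  { intros q Hq. generalize (Hflat O q ltac:(lia) Hq). unfold flat, sum2, round_metric; simpl.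
    intros E. specialize (HF0 q Hq). apply (Rmult_eq_reg_l (3/lam)); [|apply Rgt_not_eq, Rdiv_lt_0_compat; lra].
    rewrite Rmult_0_l, Rplus_0_r in E. rewrite E. field. split; lra. }
  assert (HX1 : forall q, U q -> X 1%nat q = (-2 / (3/lam)) * pd 1%nat F q / ((fun t => sin t ^ 2) (fst q) * F q)).
  { intros q Hq. generalize (Hflat 1%nat q ltac:(lia) Hq). unfold flat, sum2, round_metric; simpl.
    intros E. specialize (HF0 q Hq). specialize (Hs q Hq).
    apply (Rmult_eq_reg_l (3/lam * sin (fst q) ^ 2)).
    2:{ apply Rgt_not_eq. apply Rmult_lt_0_compat; [apply Rdiv_lt_0_compat; lra| apply pow_lt; lra]. }
    rewrite Rmult_0_l, Rplus_0_l in E. simpl. rewrite E. field. repeat split; lra. }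
  destruct (smooth_ex U F nil p HF Hp) as [e0 e1]; [simpl; tauto|].
  destruct (smooth_ex U F (O :: nil) p HF Hp) as [e00 e01]; [simpl; intros i [<-|[]]; lia|].
  destruct (smooth_ex U F (1%nat :: nil) p HF Hp) as [e10 e11]; [simpl; intros i [<-|[]]; lia|].
  specialize (Hs p Hp). specialize (HF0 p Hp).
  assert (D00 : pd O (X O) p = (-2 / (3/lam)) * (pd O (pd O F) p * (1 * F p) - pd O F p * (0 * F p + 1 * pd O F p)) / (1 * F p) ^ 2).
  { rewrite (pd_loc U O _ _ p HU Hp HX0). destruct p as [th ph].
    etransitivity. apply (Dq (fun t => pd O F (t, ph)) (fun _ => 1) (fun t => F (t, ph)) (th)); [exact e00|apply ex_derive_const|exact e0|simpl; lra].
    rewrite Dconst. reflexivity. }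
  assert (D01 : pd 1%nat (X O) p = (-2 / (3/lam)) * (pd 1%nat (pd O F) p * (1 * F p) - pd O F p * (0 * F p + 1 * pd 1%nat F p)) / (1 * F p) ^ 2).
  { rewrite (pd_loc U 1%nat _ _ p HU Hp HX0). destruct p as [th ph].
    etransitivity. apply (Dq (fun t => pd O F (th, t)) (fun _ => 1) (fun t => F (th, t)) ph); [exact e01|apply ex_derive_const|exact e1|simpl; lra].
    rewrite Dconst. reflexivity. }
  assert (D10 : pd O (X 1%nat) p = (-2 / (3/lam)) * (pd O (pd 1%nat F) p * (sin (fst p) ^ 2 * F p) - pd 1%nat F p * (2 * sin (fst p) * cos (fst p) * F p + sin (fst p) ^ 2 * pd O F p)) / (sin (fst p) ^ 2 * F p) ^ 2).
  { rewrite (pd_loc U O _ _ p HU Hp HX1). destruct p as [th ph].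
    etransitivity. apply (Dq (fun t => pd 1%nat F (t, ph)) (fun t => sin t ^ 2) (fun t => F (t, ph)) th); [exact e10| auto_derive; auto |exact e0|cbv beta; apply Rmult_integral_contrapositive; split; auto; apply pow_nonzero; simpl in Hs; lra].
    rewrite D_s2. reflexivity. }
  assert (D11 : pd 1%nat (X 1%nat) p = (-2 / (3/lam)) * (pd 1%nat (pd 1%nat F) p * (sin (fst p) ^ 2 * F p) - pd 1%nat F p * (0 * F p + sin (fst p) ^ 2 * pd 1%nat F p)) / (sin (fst p) ^ 2 * F p) ^ 2).
  { rewrite (pd_loc U 1%nat _ _ p HU Hp HX1). destruct p as [th ph].
    etransitivity. apply (Dq (fun t => pd 1%nat F (th, t)) (fun _ => sin th ^ 2) (fun t => F (th, t)) ph); [exact e11| apply ex_derive_const |exact e1|cbv beta; apply Rmult_integral_contrapositive; split; auto; apply pow_nonzero; simpl in Hs; lra].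
    rewrite Dconst. reflexivity. }
  assert (rm00 : round_metric lam O O p = 3 / lam) by reflexivity.
  assert (rm01 : round_metric lam O 1%nat p = 0) by reflexivity.
  assert (rm10 : round_metric lam 1%nat O p = 0) by reflexivity.
  assert (rm11 : round_metric lam 1%nat 1%nat p = 3 / lam * sin (fst p) ^ 2) by (unfold round_metric; simpl; ring).
  pose proof (Hric O O p ltac:(lia) ltac:(lia) Hp) as E00.
  pose proof (Hric O 1%nat p ltac:(lia) ltac:(lia) Hp) as E01.
  pose proof (Hric 1%nat 1%nat p ltac:(lia) ltac:(lia) Hp) as E11.
  rewrite ricci_val in E00, E01, E11; try (auto; lia).
  unfold lie_metric, sum2 in E00, E01, E11.
  repeat (rewrite Hflat in E00 by (auto || lia)).
  repeat (rewrite Hflat in E01 by (auto || lia)).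
  repeat (rewrite Hflat in E11 by (auto || lia)).
  repeat (rewrite pg00 in E00 || rewrite pg01 in E00 || rewrite pg10 in E00 || rewrite pg11_0 in E00 || rewrite pg11_1 in E00).
  repeat (rewrite pg00 in E01 || rewrite pg01 in E01 || rewrite pg10 in E01 || rewrite pg11_0 in E01 || rewrite pg11_1 in E01).
  repeat (rewrite pg00 in E11 || rewrite pg01 in E11 || rewrite pg10 in E11 || rewrite pg11_0 in E11 || rewrite pg11_1 in E11).
  repeat (rewrite D00 in E00 || rewrite D01 in E00 || rewrite D10 in E00 || rewrite D11 in E00).
  repeat (rewrite D00 in E01 || rewrite D01 in E01 || rewrite D10 in E01 || rewrite D11 in E01).
  repeat (rewrite D00 in E11 || rewrite D01 in E11 || rewrite D10 in E11 || rewrite D11 in E11).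
  repeat (rewrite rm00 in E00 || rewrite rm01 in E00 || rewrite rm10 in E00 || rewrite rm11 in E00).
  repeat (rewrite rm00 in E01 || rewrite rm01 in E01 || rewrite rm10 in E01 || rewrite rm11 in E01).
  repeat (rewrite rm00 in E11 || rewrite rm01 in E11 || rewrite rm10 in E11 || rewrite rm11 in E11).
  rewrite (HX0 p Hp), (HX1 p Hp) in E00, E01, E11.
  cbv beta in E00, E01, E11.
  remember (pd O F p) as F0. remember (pd 1%nat F p) as F1.
  remember (pd O (pd O F) p) as F00. remember (pd 1%nat (pd O F) p) as F10.
  remember (pd O (pd 1%nat F) p) as F01. remember (pd 1%nat (pd 1%nat F) p) as F11.
  remember (F p) as Fp. remember (sin (fst p)) as s. remember (cos (fst p)) as co.
  assert (s <> 0) by lra.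
  split; [|split].
  - match type of E00 with ?L = ?R => assert (G : F00 + Fp = Fp / 2 * (R - L)) by (field; repeat split; lra) end.
    rewrite <- E00 in G. lra.
  - match type of E01 with ?L = ?R => assert (G : F01 + F10 - 2 * co / s * F1 = Fp * (R - L)) by (field; repeat split; lra) end.
    rewrite <- E01 in G. lra.
  - match type of E11 with ?L = ?R => assert (G : F11 + s * co * F0 + s ^ 2 * Fp = Fp / 2 * (R - L)) by (field; repeat split; lra) end.
    rewrite <- E11 in G. lra.
Qed.

Lemma schwarz_F (U : pt -> Prop) F p : open U -> smooth_on U F -> U p ->
  pd O (pd 1%nat F) p = pd 1%nat (pd O F) p.
Proof.
  intros HU HF Hp. destruct p as [x y].
  apply (Schwarz (fun u v => F (u, v)) x y).
  - apply locally_2d_locally. apply HU in Hp.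
    eapply filter_imp; [|exact Hp]. intros [u v] Huv. simpl.
    destruct (smooth_ex U F nil (u,v) HF Huv) as [e0 e1]; [simpl; tauto|].
    destruct (smooth_ex U F (O :: nil) (u,v) HF Huv) as [e00 e01]; [simpl; intros i [<-|[]]; lia|].
    destruct (smooth_ex U F (1%nat :: nil) (u,v) HF Huv) as [e10 e11]; [simpl; intros i [<-|[]]; lia|].
    repeat split; [exact e0|exact e1|exact e10|exact e01].
  - apply continuity_2d_pt_filterlim.
    destruct (HF (cons O (cons 1%nat nil)) (x,y) Hp) as [C _]; [simpl; intros i [<-|[<-|[]]]; lia|].
    eapply filterlim_ext; [|exact C]. intros [u v]. reflexivity.
  - apply continuity_2d_pt_filterlim.
    destruct (HF (cons 1%nat (cons O nil)) (x,y) Hp) as [C _]; [simpl; intros i [<-|[<-|[]]]; lia|].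
    eapply filterlim_ext; [|exact C]. intros [u v]. reflexivity.
Qed.

Lemma seg_const (g : R -> R) a b : (forall t, Rmin a b <= t <= Rmax a b -> is_derive g t 0) -> g a = g b.
Proof.
  intros H.
  destruct (MVT_gen g a b (fun _ => 0)) as [c [_ Hc]].
  - intros t Ht. apply H. lra.
  - intros t Ht. apply continuity_pt_filterlim. apply (ex_derive_continuous (K:=R_AbsRing) (V:=R_NormedModule) g t). eexists. apply H. lra.
  - lra.
Qed.

Lemma ballR a b e : Rabs (b - a) < e -> @ball R_UniformSpace a e b.
Proof. intros H. unfold ball; simpl. unfold AbsRing_ball, abs, minus, plus, opp; simpl. exact H. Qed.
Lemma ballR_inv a b e : @ball R_UniformSpace a e b -> Rabs (b - a) < e.
Proof. unfold ball; simpl. unfold AbsRing_ball, abs, minus, plus, opp; simpl. auto. Qed.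

Definition dzero (U : pt -> Prop) (f : pt -> R) :=
  forall q, U q -> is_derive (fun t => f (t, snd q)) (fst q) 0 /\ is_derive (fun t => f (fst q, t)) (snd q) 0.

Lemma between a b t (e : R) : Rmin a b <= t <= Rmax a b -> Rabs (b - a) < e -> Rabs (t - a) < e.
Proof. unfold Rmin, Rmax. destruct (Rle_dec a b); intros; split_Rabs; lra. Qed.

Lemma local_const (U : pt -> Prop) f p : open U -> dzero U f -> U p ->
  exists e : posreal, forall q, Rabs (fst q - fst p) < e -> Rabs (snd q - snd p) < e -> U q /\ f q = f p.
Proof.
  intros HU Hd Hp. destruct (HU p Hp) as [e He].
  assert (In : forall q, Rabs (fst q - fst p) < e -> Rabs (snd q - snd p) < e -> U q).
  { intros [q1 q2] H1 H2. apply He. destruct p as [p1 p2]. split; apply ballR; auto. }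
  exists e. intros [q1 q2] H1 H2. split; [apply In; auto|]. destruct p as [p1 p2]. simpl in *.
  transitivity (f (q1, p2)).
  - symmetry. apply (seg_const (fun t => f (q1, t)) p2 q2). intros t Ht.
    apply (Hd (q1, t)). apply In; simpl; auto. apply (between p2 q2 t); auto.
  - apply (seg_const (fun t => f (t, p2)) q1 p1). intros t Ht.
    apply (Hd (t, p2)). apply In; simpl. 
    + rewrite Rabs_minus_sym in H1. rewrite <- (Rabs_Ropp (t - p1)). 
      replace (- (t - p1)) with ((p1 - q1) - (t - q1)) by ring.
      unfold Rmin, Rmax in Ht. destruct (Rle_dec q1 p1); split_Rabs; lra.
    + rewrite Rminus_diag, Rabs_R0. apply cond_pos.
Qed.

Lemma conn_const (U : pt -> Prop) f : open U -> connected_set U -> dzero U f ->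
  forall p q, U p -> U q -> f q = f p.
Proof.
  intros HU HC Hd p q Hp Hq.
  set (A := fun r : pt => exists e : posreal, forall q, Rabs (fst q - fst r) < e -> Rabs (snd q - snd r) < e -> U q /\ f q = f p).
  set (B := fun r : pt => exists e : posreal, forall q, Rabs (fst q - fst r) < e -> Rabs (snd q - snd r) < e -> U q /\ f q <> f p).
  assert (OA : open A).
  { intros r [e He]. exists (pos_div_2 e). intros r' Hb. destruct Hb as [B1 B2].
    apply ballR_inv in B1. apply ballR_inv in B2. exists (pos_div_2 e). intros q' H1 H2. apply He; simpl in *.
    - replace (fst q' - fst r) with ((fst q' - fst r') + (fst r' - fst r)) by ring.
      eapply Rle_lt_trans; [apply Rabs_triang|]. lra.
    - replace (snd q' - snd r) with ((snd q' - snd r') + (snd r' - snd r)) by ring.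
      eapply Rle_lt_trans; [apply Rabs_triang|]. lra. }
  assert (OB : open B).
  { intros r [e He]. exists (pos_div_2 e). intros r' Hb. destruct Hb as [B1 B2].
    apply ballR_inv in B1. apply ballR_inv in B2. exists (pos_div_2 e). intros q' H1 H2. apply He; simpl in *.
    - replace (fst q' - fst r) with ((fst q' - fst r') + (fst r' - fst r)) by ring.
      eapply Rle_lt_trans; [apply Rabs_triang|]. lra.
    - replace (snd q' - snd r) with ((snd q' - snd r') + (snd r' - snd r)) by ring.
      eapply Rle_lt_trans; [apply Rabs_triang|]. lra. }
  destruct (Req_dec (f q) (f p)) as [E|E]; auto. exfalso.
  destruct (HC A B OA OB) as [r [Ur [[e1 H1] [e2 H2]]]].
  - intros r Ur. destruct (local_const U f r HU Hd Ur) as [e He].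
    destruct (Req_dec (f r) (f p)) as [E'|E'].
    + left. exists e. intros q' a b. destruct (He q' a b). split; auto. congruence.
    + right. exists e. intros q' a b. destruct (He q' a b). split; auto. congruence.
  - exists p. split; auto. destruct (local_const U f p HU Hd Hp) as [e He]. exists e. exact He.
  - exists q. split; auto. destruct (local_const U f q HU Hd Hq) as [e He]. exists e.
    intros q' a b. destruct (He q' a b). split; auto. congruence.
  - assert (Z1 : Rabs (fst r - fst r) < e1) by (rewrite Rminus_diag, Rabs_R0; apply cond_pos).
    assert (Z2 : Rabs (snd r - snd r) < e1) by (rewrite Rminus_diag, Rabs_R0; apply cond_pos).
    assert (Z3 : Rabs (fst r - fst r) < e2) by (rewrite Rminus_diag, Rabs_R0; apply cond_pos).
    assert (Z4 : Rabs (snd r - snd r) < e2) by (rewrite Rminus_diag, Rabs_R0; apply cond_pos).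
    destruct (H1 r Z1 Z2). destruct (H2 r Z3 Z4). auto.
Qed.

Lemma Dv (f0 f1 f2 A B C : R -> R) x d0 d1 d2 a b c :
  is_derive f0 x d0 -> is_derive f1 x d1 -> is_derive f2 x d2 ->
  is_derive A x a -> is_derive B x b -> is_derive C x c ->
  is_derive (fun t => f0 t * A t + f1 t * B t + f2 t * C t) x
    (d0 * A x + f0 x * a + (d1 * B x + f1 x * b) + (d2 * C x + f2 x * c)).
Proof.
  intros H0 H1 H2 HA HB HC.
  apply (is_derive_plus (fun t => f0 t * A t + f1 t * B t) (fun t => f2 t * C t)).
  apply (is_derive_plus (fun t => f0 t * A t) (fun t => f1 t * B t)).
  all: eapply is_derive_ext; [intro; reflexivity|].
  all: first [ apply (is_derive_mult f0 A) | apply (is_derive_mult f1 B) | apply (is_derive_mult f2 C) ]; auto.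
  all: intros; apply Rmult_comm.
Qed.
From Stdlib Require Import Classical.

Definition v1 (F : pt -> R) (q : pt) := F q * (sin (fst q) * cos (snd q)) + pd O F q * (cos (fst q) * cos (snd q)) + pd 1%nat F q * (- sin (snd q) / sin (fst q)).
Definition v2 (F : pt -> R) (q : pt) := F q * (sin (fst q) * sin (snd q)) + pd O F q * (cos (fst q) * sin (snd q)) + pd 1%nat F q * (cos (snd q) / sin (fst q)).
Definition v3 (F : pt -> R) (q : pt) := F q * (cos (fst q) * 1) + pd O F q * (- sin (fst q) * 1) + pd 1%nat F q * (0 * 1).

Section VS.
Variables (lam : R) (U : pt -> Prop) (X : vfield2) (F : pt -> R).
Hypotheses (Hl : 0 < lam) (HU : open U)
  (Hth : forall p, U p -> 0 < fst p < PI)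
  (HF : smooth_on U F) (HF0 : forall p, U p -> F p <> 0)
  (Hflat : forall i p, (i <= 1)%nat -> U p ->
     flat (round_metric lam) X i p = -2 * pd i F p / F p)
  (Hric : forall i j p, (i <= 1)%nat -> (j <= 1)%nat -> U p ->
     ricci (round_metric lam) i j p =
       / 2 * (flat (round_metric lam) X i p * flat (round_metric lam) X j p)
       - / 2 * lie_metric (round_metric lam) X i j p
       + lam * round_metric lam i j p).

Ltac prep x y Hq :=
  let P1 := fresh "P1" in let P2 := fresh "P2" in let P3 := fresh "P3" in
  destruct (pde lam U X F (x, y) Hl HU Hth HF HF0 Hflat Hric Hq) as [P1 [P2 P3]];
  let S := fresh "S" in pose proof (schwarz_F U F (x, y) HU HF Hq) as S;
  let Hs := fresh "Hs" in assert (Hs : sin x > 0) by (apply sin_gt_0; apply (Hth (x,y) Hq));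
  let HFn := fresh "HFn" in pose proof (HF0 (x,y) Hq) as HFn;
  cbn [fst snd] in P1, P2, P3;
  let Q := fresh "Q" in let Q' := fresh "Q'" in
  assert (Q : pd O (pd 1%nat F) (x, y) = cos x / sin x * pd 1%nat F (x, y)) by lra;
  assert (Q' : pd 1%nat (pd O F) (x, y) = cos x / sin x * pd 1%nat F (x, y)) by lra;
  destruct (smooth_ex U F nil (x,y) HF Hq) as [e0 e1]; [simpl; tauto|];
  destruct (smooth_ex U F (O :: nil) (x,y) HF Hq) as [e00 e01]; [simpl; intros i [<-|[]]; lia|];
  destruct (smooth_ex U F (1%nat :: nil) (x,y) HF Hq) as [e10 e11]; [simpl; intros i [<-|[]]; lia|].

Lemma v1_dz : dzero U (v1 F).
Proof.
  intros [x y] Hq. prep x y Hq. split.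
  -
    assert (dA : is_derive (fun t => sin t * cos y) x (cos x * cos y)) by (auto_derive; auto; ring).
    assert (dB : is_derive (fun t => cos t * cos y) x (- sin x * cos y)) by (auto_derive; auto; ring).
    assert (dC : is_derive (fun t => - sin y / sin t) x (sin y * cos x / sin x ^ 2)) by (auto_derive; [try lra|field; lra]).
    pose proof (Dv (fun t => F (t,y)) (fun t => pd O F (t,y)) (fun t => pd 1%nat F (t,y))
      _ _ _ x (pd O F (x,y)) (pd O (pd O F) (x,y)) (pd O (pd 1%nat F) (x,y)) _ _ _
      (Derive_correct (fun t => F (t,y)) x e0) (Derive_correct (fun t => pd O F (t,y)) x e00)
      (Derive_correct (fun t => pd 1%nat F (t,y)) x e10) dA dB dC) as H.
    cbv beta in H.
    match type of H with is_derive _ _ ?v => assert (Z : v = 0) end.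
    { rewrite P1, Q. field. lra. }
    rewrite Z in H. exact H.
  -
    assert (dA : is_derive (fun t => sin x * cos t) y (- sin x * sin y)) by (auto_derive; auto; ring).
    assert (dB : is_derive (fun t => cos x * cos t) y (- cos x * sin y)) by (auto_derive; auto; ring).
    assert (dC : is_derive (fun t => - sin t / sin x) y (- cos y / sin x)) by (auto_derive; [try lra|field; lra]).
    pose proof (Dv (fun t => F (x,t)) (fun t => pd O F (x,t)) (fun t => pd 1%nat F (x,t))
      _ _ _ y (pd 1%nat F (x,y)) (pd 1%nat (pd O F) (x,y)) (pd 1%nat (pd 1%nat F) (x,y)) _ _ _
      (Derive_correct (fun t => F (x,t)) y e1) (Derive_correct (fun t => pd O F (x,t)) y e01)
      (Derive_correct (fun t => pd 1%nat F (x,t)) y e11) dA dB dC) as H.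
    cbv beta in H.
    match type of H with is_derive _ _ ?v => assert (Z : v = 0) end.
    { rewrite Q', P3. assert (E := sin2_cos2 x); unfold Rsqr in E. transitivity (pd 1%nat F (x,y) * cos y / sin x * (sin x * sin x + cos x * cos x - 1)); [field; lra | rewrite E; ring]. }
    rewrite Z in H. exact H.
Qed.

Lemma v2_dz : dzero U (v2 F).
Proof.
  intros [x y] Hq. prep x y Hq. split.
  -
    assert (dA : is_derive (fun t => sin t * sin y) x (cos x * sin y)) by (auto_derive; auto; ring).
    assert (dB : is_derive (fun t => cos t * sin y) x (- sin x * sin y)) by (auto_derive; auto; ring).
    assert (dC : is_derive (fun t => cos y / sin t) x (- cos y * cos x / sin x ^ 2)) by (auto_derive; [try lra|field; lra]).
    pose proof (Dv (fun t => F (t,y)) (fun t => pd O F (t,y)) (fun t => pd 1%nat F (t,y))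
      _ _ _ x (pd O F (x,y)) (pd O (pd O F) (x,y)) (pd O (pd 1%nat F) (x,y)) _ _ _
      (Derive_correct (fun t => F (t,y)) x e0) (Derive_correct (fun t => pd O F (t,y)) x e00)
      (Derive_correct (fun t => pd 1%nat F (t,y)) x e10) dA dB dC) as H.
    cbv beta in H.
    match type of H with is_derive _ _ ?v => assert (Z : v = 0) end.
    { rewrite P1, Q. field. lra. }
    rewrite Z in H. exact H.
  -
    assert (dA : is_derive (fun t => sin x * sin t) y (sin x * cos y)) by (auto_derive; auto; ring).
    assert (dB : is_derive (fun t => cos x * sin t) y (cos x * cos y)) by (auto_derive; auto; ring).
    assert (dC : is_derive (fun t => cos t / sin x) y (- sin y / sin x)) by (auto_derive; [try lra|field; lra]).
    pose proof (Dv (fun t => F (x,t)) (fun t => pd O F (x,t)) (fun t => pd 1%nat F (x,t))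
      _ _ _ y (pd 1%nat F (x,y)) (pd 1%nat (pd O F) (x,y)) (pd 1%nat (pd 1%nat F) (x,y)) _ _ _
      (Derive_correct (fun t => F (x,t)) y e1) (Derive_correct (fun t => pd O F (x,t)) y e01)
      (Derive_correct (fun t => pd 1%nat F (x,t)) y e11) dA dB dC) as H.
    cbv beta in H.
    match type of H with is_derive _ _ ?v => assert (Z : v = 0) end.
    { rewrite Q', P3. assert (E := sin2_cos2 x); unfold Rsqr in E. transitivity (pd 1%nat F (x,y) * sin y / sin x * (sin x * sin x + cos x * cos x - 1)); [field; lra | rewrite E; ring]. }
    rewrite Z in H. exact H.
Qed.

Lemma v3_dz : dzero U (v3 F).
Proof.
  intros [x y] Hq. prep x y Hq. split.
  -
    assert (dA : is_derive (fun t => cos t * 1) x (- sin x * 1)) by (auto_derive; auto; ring).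
    assert (dB : is_derive (fun t => - sin t * 1) x (- cos x * 1)) by (auto_derive; auto; ring).
    assert (dC : is_derive (fun t => 0 * 1) x (0)) by (auto_derive; [try lra|field; lra]).
    pose proof (Dv (fun t => F (t,y)) (fun t => pd O F (t,y)) (fun t => pd 1%nat F (t,y))
      _ _ _ x (pd O F (x,y)) (pd O (pd O F) (x,y)) (pd O (pd 1%nat F) (x,y)) _ _ _
      (Derive_correct (fun t => F (t,y)) x e0) (Derive_correct (fun t => pd O F (t,y)) x e00)
      (Derive_correct (fun t => pd 1%nat F (t,y)) x e10) dA dB dC) as H.
    cbv beta in H.
    match type of H with is_derive _ _ ?v => assert (Z : v = 0) end.
    { rewrite P1, Q. field. lra. }
    rewrite Z in H. exact H.
  -
    assert (dA : is_derive (fun t => cos x * 1) y (0)) by (auto_derive; auto; ring).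
    assert (dB : is_derive (fun t => - sin x * 1) y (0)) by (auto_derive; auto; ring).
    assert (dC : is_derive (fun t => 0 * 1) y (0)) by (auto_derive; [try lra|field; lra]).
    pose proof (Dv (fun t => F (x,t)) (fun t => pd O F (x,t)) (fun t => pd 1%nat F (x,t))
      _ _ _ y (pd 1%nat F (x,y)) (pd 1%nat (pd O F) (x,y)) (pd 1%nat (pd 1%nat F) (x,y)) _ _ _
      (Derive_correct (fun t => F (x,t)) y e1) (Derive_correct (fun t => pd O F (x,t)) y e01)
      (Derive_correct (fun t => pd 1%nat F (x,t)) y e11) dA dB dC) as H.
    cbv beta in H.
    match type of H with is_derive _ _ ?v => assert (Z : v = 0) end.
    { rewrite Q', P3. field. lra. }
    rewrite Z in H. exact H.
Qed.

End VS.

Lemma rep (F : pt -> R) x y : sin x <> 0 ->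
  F (x,y) = v1 F (x,y) * (sin x * cos y) + v2 F (x,y) * (sin x * sin y) + v3 F (x,y) * cos x.
Proof.
  intros Hs. unfold v1, v2, v3; cbn [fst snd].
  assert (Ex := sin2_cos2 x). assert (Ey := sin2_cos2 y). unfold Rsqr in Ex, Ey.
  symmetry.
  transitivity (F (x,y) * (sin x * sin x * (sin y * sin y + cos y * cos y) + cos x * cos x)
     + pd O F (x,y) * (cos x * sin x * (sin y * sin y + cos y * cos y) - sin x * cos x)); [field; auto|].
  rewrite Ey, Rmult_1_r, Ex. ring.
Qed.

Lemma polar c1 c2 : exists a phi0, forall y, a * sin (y + phi0) = c1 * cos y + c2 * sin y.
Proof.
  destruct (Req_dec c2 0) as [E|E].
  - exists c1, (PI/2). intros y. rewrite sin_plus, cos_PI2, sin_PI2. subst. ring.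
  - exists (c2 * sqrt (1 + (c1/c2)²)), (atan (c1/c2)). intros y.
    rewrite sin_plus, cos_atan, sin_atan.
    assert (0 < sqrt (1 + (c1/c2)²)) by (apply sqrt_lt_R0; pose proof (Rle_0_sqr (c1/c2)); lra).
    field. split; lra.
Qed.

Theorem mainTheorem15 (lam : R) (U : pt -> Prop) (X : vfield2) (F : pt -> R) :
  0 < lam ->
  open U -> connected_set U ->
  (forall p, U p -> 0 < fst p < PI) ->
  (forall k, (k <= 1)%nat -> smooth_on U (X k)) ->
  smooth_on U F ->
  (forall p, U p -> F p <> 0) ->
  (* X^flat = -2 dF / F *)
  (forall i p, (i <= 1)%nat -> U p ->
     flat (round_metric lam) X i p = -2 * pd i F p / F p) ->
  (* Ric(g) = 1/2 X^flat (x) X^flat - 1/2 L_X g + lam g *)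
  (forall i j p, (i <= 1)%nat -> (j <= 1)%nat -> U p ->
     ricci (round_metric lam) i j p =
       / 2 * (flat (round_metric lam) X i p * flat (round_metric lam) X j p)
       - / 2 * lie_metric (round_metric lam) X i j p
       + lam * round_metric lam i j p) ->
  (exists a b phi0 : R,
     forall p, U p ->
       F p = a * sin (snd p + phi0) * sin (fst p) + b * cos (fst p))
  /\ ~ (forall th ph, 0 < th < PI -> U (th, ph)).
Proof.
  intros Hl HU HC Hth HX HF HF0 Hflat Hric.
  assert (H1 : exists a b phi0 : R,
     forall p, U p ->
       F p = a * sin (snd p + phi0) * sin (fst p) + b * cos (fst p)).
  { destruct (classic (exists p, U p)) as [[p0 Hp0]|Hn].
    - destruct (polar (v1 F p0) (v2 F p0)) as [a [phi0 Hpol]].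
      exists a, (v3 F p0), phi0. intros [x y] Hq.
      assert (Hs : sin x > 0) by (apply sin_gt_0; apply (Hth (x,y) Hq)).
      rewrite (rep F x y) by lra.
      rewrite (conn_const U (v1 F) HU HC (v1_dz lam U X F Hl HU Hth HF HF0 Hflat Hric) p0 (x,y) Hp0 Hq).
      rewrite (conn_const U (v2 F) HU HC (v2_dz lam U X F Hl HU Hth HF HF0 Hflat Hric) p0 (x,y) Hp0 Hq).
      rewrite (conn_const U (v3 F) HU HC (v3_dz lam U X F Hl HU Hth HF HF0 Hflat Hric) p0 (x,y) Hp0 Hq).
      cbn [fst snd]. rewrite Hpol. ring.
    - exists 0, 0, 0. intros p Hp. exfalso. apply Hn. eauto. }
  split; [exact H1|].
  intros Hall. destruct H1 as [a [b [phi0 H]]].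
  assert (HPI := PI2_3_2).
  assert (Hu : U (PI/2, - phi0)) by (apply Hall; lra).
  apply (HF0 _ Hu). rewrite (H _ Hu). cbn [fst snd].
  replace (- phi0 + phi0) with 0 by ring.
  rewrite sin_0, cos_PI2. ring.
Qed.
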